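(* The function $\tilde f$ is continuous at every point of $\mathbf{R}\setminus\mathbf{Q}$, and $$\lim_{x\to0^+,\ x\notin\mathbf{Q}}\tilde f(x)=1,\qquad \lim_{x\to\frac12^-,\ x\notin\mathbf{Q}}\tilde f(x)=0.$$
   Context: Let $A(y)=1/y-\lfloor 1/y\rfloor$ be the Gauss map. Define $w$ on irrationals $y\in(0,\tfrac12)$ by $w(y)=\frac{y}{2}\log\frac{1-y}{y}-\log(1-y)$, and extend $w$ to all irrationals as an even $1$-periodic function (so $w(y)=w(1-y)$ for irrational $y\in(\tfrac12,1)$); this $w$ coincides with the even part $W^+$ of the Wilton function. For irrational $x\in(0,\tfrac12)$ let $n=\lfloor 1/x\rfloor\ (\ge2)$ and define $$\Phi(x)=x\log x+xA(x)\log\bigl(xA(x)\bigr)+x\sum_{j=1}^{n-1}\log(1-jx),\qquad f(x)=-w(x)-x\,w(A(x))-\Phi(x).$$ Let $\tilde f$ be the odd $1$-periodic extension of $f$ to $\mathbf{R}\setminus\mathbf{Q}$: for irrational $x$, $\tilde f(x)=f(\{x\})$ if $\{x\}\in(0,\tfrac12)$ and $\tilde f(x)=-f(1-\{x\})$ if $\{x\}\in(\tfrac12,1)$, where $\{x\}=x-\lfloor x\rfloor$. *)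

(* Defs.v *)
From Stdlib Require Import Reals Lra ZArith.
Open Scope R_scope.

Definition irrational (x : R) : Prop :=
  ~ exists (p q : Z), q <> 0%Z /\ x = IZR p / IZR q.

Definition floorR (x : R) : R := IZR (Int_part x).

Definition gaussA (y : R) : R := / y - floorR (/ y).

(* w on (0,1/2) *)
Definition w0 (y : R) : R := y / 2 * ln ((1 - y) / y) - ln (1 - y).

(* even 1-periodic extension of w0 (meaningful on irrationals) *)
Definition w (y : R) : R :=
  let t := y - floorR y in
  if Rlt_dec t (1/2) then w0 t else w0 (1 - t).

Fixpoint sumlog (x : R) (m : nat) : R :=
  match m with
  | O => 0
  | S k => sumlog x k + ln (1 - INR (S k) * x)
  end.

Definition nfloor (x : R) : nat := Z.to_nat (Int_part (/ x)).

Definition Phi (x : R) : R :=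
  x * ln x + x * gaussA x * ln (x * gaussA x) + x * sumlog x (nfloor x - 1).

Definition f (x : R) : R := - w x - x * w (gaussA x) - Phi x.

(* odd 1-periodic extension of f (meaningful on irrationals) *)
Definition ftilde (x : R) : R :=
  let t := x - floorR x in
  if Rlt_dec t (1/2) then f t else - f (1 - t).

(* Main.v *)
From Stdlib Require Import Reals Lra Lia ZArith.
From Coquelicot Require Import Coquelicot.
Require Import Defs.
Open Scope R_scope.

Lemma ln_le1 : forall y, 0 < y -> ln y <= y - 1.
Proof. intros y Hy. pose proof (exp_ineq1_le (ln y)). rewrite exp_ln in H; lra. Qed.

Lemma ln_ge1 : forall y, 0 < y -> 1 - / y <= ln y.
Proof. intros y Hy. pose proof (ln_le1 (/y) (Rinv_0_lt_compat _ Hy)).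
  rewrite ln_Rinv in H; lra. Qed.

Lemma Int_part_uniq : forall r z, IZR z <= r < IZR z + 1 -> Int_part r = z.
Proof. intros r z [H1 H2]. unfold Int_part.
  assert (z + 1 = up r)%Z. { apply tech_up; rewrite plus_IZR; lra. }
  lia. Qed.

Lemma Int_part_bnd : forall r, IZR (Int_part r) <= r < IZR (Int_part r) + 1.
Proof. intro r. pose proof (base_Int_part r). lra. Qed.

Lemma xlnx_bound : forall v, 0 < v <= 1 -> - (2 * sqrt v) <= v * ln v <= 0.
Proof. intros v [H1 H2].
  assert (Hs : 0 < sqrt v) by (apply sqrt_lt_R0; lra).
  assert (Hl : ln v <= 0). { rewrite <- ln_1. apply ln_le; lra. }
  assert (E : ln v = 2 * ln (sqrt v)).
  { rewrite <- (sqrt_sqrt v) at 1 by lra. rewrite ln_mult by lra. ring. }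
  pose proof (ln_ge1 (sqrt v) Hs).
  split; [|nra].
  assert (v * ln v = 2 * (sqrt v * (sqrt v * ln (sqrt v)))).
  { rewrite E. rewrite <- (sqrt_sqrt v) at 1 by lra. ring. }
  rewrite H0.
  assert (sqrt v * ln (sqrt v) >= sqrt v * (1 - / sqrt v)) by (apply Rle_ge, Rmult_le_compat_l; lra).
  assert (sqrt v * (1 - / sqrt v) = sqrt v - 1) by (field; lra).
  assert (sqrt v <= 1). { rewrite <- sqrt_1. apply sqrt_le_1_alt; lra. }
  nra.
Qed.

Lemma ln1m_bound : forall y, 0 <= y <= 1/2 -> - (2 * y) <= ln (1 - y) <= 0.
Proof. intros y Hy. split.
  - pose proof (ln_ge1 (1 - y)). assert (/ (1 - y) <= 1 + 2*y).
    { apply (Rmult_le_reg_l (1 - y)); [lra|]. rewrite Rinv_r by lra. nra. }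
    specialize (H ltac:(lra)). lra.
  - rewrite <- ln_1. apply ln_le; lra.
Qed.

Lemma sqrt_le_sq : forall y z, 0 <= y -> 0 <= z -> y <= z * z -> sqrt y <= z.
Proof. intros. rewrite <- (sqrt_square z) by auto. apply sqrt_le_1_alt; auto. Qed.

Lemma le_sqrt : forall x, 0 <= x <= 1 -> x <= sqrt x.
Proof. intros x Hx. assert (sqrt x <= 1). { rewrite <- sqrt_1. apply sqrt_le_1_alt; lra. }
  pose proof (sqrt_sqrt x ltac:(lra)). pose proof (sqrt_pos x). nra. Qed.

Lemma w0_small : forall y, 0 < y <= 1/2 -> - (4 * sqrt y) <= w0 y <= 4 * sqrt y.
Proof. intros y Hy. unfold w0. rewrite ln_div by lra.
  pose proof (xlnx_bound y ltac:(lra)). pose proof (ln1m_bound y ltac:(lra)).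
  pose proof (le_sqrt y ltac:(lra)).
  assert (y * ln (1 - y) <= 0 /\ - (2*y) * y <= y * ln (1 - y)) by (split; nra).
  assert (y / 2 * (ln (1 - y) - ln y) = (y * ln (1-y)) / 2 - (y * ln y) / 2) by field.
  rewrite H3. nra.
Qed.

Lemma irr_neq : forall x p q, irrational x -> q <> 0%Z -> x <> IZR p / IZR q.
Proof. intros x p q H Hq E. apply H. exists p, q; auto. Qed.

Lemma irr_neq_int : forall x k, irrational x -> x <> IZR k.
Proof. intros x k H E. apply (irr_neq x k 1 H); [lia|]. rewrite E. field. Qed.

Lemma irr_neq_half : forall x, irrational x -> x <> 1/2.
Proof. intros x H E. apply (irr_neq x 1 2 H); [lia|]. rewrite E. reflexivity. Qed.

Lemma irr_sub_int : forall x k, irrational x -> irrational (x - IZR k).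
Proof. intros x k H [p [q [Hq E]]]. apply H. exists (p + k*q)%Z, q. split; auto.
  rewrite plus_IZR, mult_IZR. replace x with ((x - IZR k) + IZR k) by ring. rewrite E.
  field. apply not_0_IZR; auto. Qed.

Lemma irr_opp : forall x, irrational x -> irrational (- x).
Proof. intros x H [p [q [Hq E]]]. apply H. exists (-p)%Z, q. split; auto.
  rewrite opp_IZR. replace x with (- - x) by ring. rewrite E. field. apply not_0_IZR; auto. Qed.

Lemma irr_1m : forall x, irrational x -> irrational (1 - x).
Proof. intros x H. replace (1 - x) with (- (x - IZR 1)) by (simpl; ring).
  apply irr_opp, irr_sub_int; auto. Qed.

Lemma irr_inv : forall x, irrational x -> irrational (/ x).
Proof. intros x H [p [q [Hq E]]].
  assert (Hx : x <> 0). { intro E0. apply (irr_neq_int x 0 H). rewrite E0. reflexivity. }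
  assert (Hp : p <> 0%Z). { intro. subst p. rewrite Rdiv_0_l in E. apply (Rinv_neq_0_compat x Hx E). }
  apply H. exists q, p. split; auto.
  rewrite <- (Rinv_inv x), E. field. split; apply not_0_IZR; auto. Qed.

Definition Fp (t : R) : R := - (1 - t) * ln (1 - t) - t.

Lemma step_ineq : forall c x, 0 < c -> 0 < x ->
  x * ln c <= (c + x) * ln (c + x) - c * ln c - x <= x * ln (c + x).
Proof. intros c x Hc Hx. set (a := c + x).
  assert (Ha : 0 < a) by (unfold a; lra).
  pose proof (ln_le1 (c / a) ltac:(apply Rdiv_lt_0_compat; lra)).
  pose proof (ln_le1 (a / c) ltac:(apply Rdiv_lt_0_compat; lra)).
  rewrite ln_div in H, H0 by lra.
  assert (a * (ln a - ln c) >= a - c).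
  { assert (a * (c / a - 1) = c - a) by (field; lra). nra. }
  assert (c * (ln a - ln c) <= a - c).
  { assert (c * (a / c - 1) = a - c) by (field; lra). nra. }
  assert (a - c = x) by (unfold a; ring).
  assert (E1 : a*ln a - c*ln c - x - x*ln c = a*(ln a - ln c) - (a - c)) by (unfold a; ring).
  assert (E2 : x * ln a - (a*ln a - c*ln c - x) = (a - c) - c * (ln a - ln c)) by (unfold a; ring).
  lra.
Qed.

Lemma sum_bounds : forall m x, 0 < x -> (INR m + 1) * x < 1 ->
  Fp ((INR m + 1) * x) - Fp x <= x * sumlog x m <= Fp (INR m * x).
Proof. induction m; intros x Hx Hm.
  - simpl. unfold Fp. replace (1 - 0 * x) with 1 by ring. rewrite ln_1.
    replace ((0+1)*x) with x by ring. lra.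
  - change (sumlog x (S m)) with (sumlog x m + ln (1 - INR (S m) * x)). rewrite !S_INR in *.
    assert (Hm' : (INR m + 1) * x < 1) by (pose proof (pos_INR m); nra).
    specialize (IHm x Hx Hm').
    pose proof (step_ineq (1 - (INR m + 1) * x) x ltac:(lra) Hx) as [A1 A2].
    pose proof (step_ineq (1 - (INR m + 1 + 1) * x) x ltac:(lra) Hx) as [B1 B2].
    replace (1 - (INR m + 1) * x + x) with (1 - INR m * x) in A1, A2 by ring.
    replace (1 - (INR m + 1 + 1) * x + x) with (1 - (INR m + 1) * x) in B1, B2 by ring.
    unfold Fp in *.
    replace (1 - INR m * x) with (1 - INR m * x) by ring.
    split.
    + rewrite Rmult_plus_distr_l. lra.
    + rewrite Rmult_plus_distr_l. lra.
Qed.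

Definition G (K : Z) (b : bool) (t : R) : R :=
  - w0 t - t * (if b then w0 (/ t - IZR K) else w0 (1 - (/ t - IZR K)))
  - (t * ln t + t * (/ t - IZR K) * ln (t * (/ t - IZR K)) + t * sumlog t (Z.to_nat K - 1)).

Definition brb (y : R) : bool := if Rlt_dec y (1/2) then true else false.

Lemma w_unit : forall y, 0 <= y < 1 -> w y = if brb y then w0 y else w0 (1 - y).
Proof. intros y Hy. unfold w, floorR, brb.
  rewrite (Int_part_uniq y 0) by (simpl; lra). simpl IZR. rewrite Rminus_0_r. destruct (Rlt_dec y (1/2)); reflexivity. Qed.

Lemma f_G : forall t K, 0 < t < 1/2 -> Int_part (/ t) = K -> f t = G K (brb (/ t - IZR K)) t.
Proof. intros t K Ht HK. pose proof (Int_part_bnd (/ t)) as Hb. rewrite HK in Hb.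
  unfold f, G, Phi, gaussA, nfloor, floorR. rewrite HK.
  rewrite (w_unit t) by lra. rewrite (w_unit (/ t - IZR K)) by lra.
  unfold brb at 1. destruct (Rlt_dec t (1/2)); [|lra]. reflexivity.
Qed.

Lemma cont_of_der : forall h x, ex_derive h x -> continuity_pt h x.
Proof. intros. apply continuity_pt_filterlim. exact (ex_derive_continuous h x H). Qed.

Lemma cont_eps : forall h x0, continuity_pt h x0 -> forall eps, eps > 0 ->
  exists d, d > 0 /\ forall x, Rabs (x - x0) < d -> Rabs (h x - h x0) < eps.
Proof. intros h x0 H eps He. unfold continuity_pt, continue_in, limit1_in, limit_in in H.
  destruct (H eps He) as [d [Hd H']]. exists d. split; auto. intros x Hx.
  destruct (Req_dec x x0).
  - subst. rewrite Rminus_diag, Rabs_R0. lra.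
  - apply (H' x). split; [unfold D_x, no_cond; auto|]. simpl. unfold R_dist. auto.
Qed.

Lemma der_sumlog : forall m t0, 0 < t0 -> INR m * t0 < 1 -> ex_derive (fun t => sumlog t m) t0.
Proof. induction m; intros t0 H0 H1.
  - apply (ex_derive_ext (fun _ => 0)); [reflexivity| auto_derive; auto].
  - apply (ex_derive_ext (fun t => sumlog t m + ln (1 - INR (S m) * t))); [reflexivity|].
    apply (ex_derive_plus (fun t => sumlog t m) (fun t => ln (1 - INR (S m) * t))).
    + apply IHm; auto. rewrite S_INR in H1. nra.
    + clear IHm. revert H1. generalize (INR (S m)). intros N H1. auto_derive. lra.
Qed.

Lemma der_G : forall K b t0, 0 < t0 < 1/2 -> IZR K < / t0 < IZR K + 1 -> (0 <= K)%Z ->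
  ex_derive (G K b) t0.
Proof. intros K b t0 Ht HK HK0.
  assert (Hu : 0 < t0 * (/ t0 - IZR K)) by (apply Rmult_lt_0_compat; lra).
  assert (Hi : t0 * / t0 = 1) by (field; lra).
  unfold G. set (m := (Z.to_nat K - 1)%nat).
  assert (Hm : INR m * t0 < 1).
  { assert (INR m <= IZR K).
    { unfold m. rewrite INR_IZR_INZ. apply IZR_le. lia. }
    assert (IZR K * t0 < 1). { apply (Rmult_lt_reg_r (/ t0)); [apply Rinv_0_lt_compat; lra|].
        rewrite Rmult_assoc, Hi. lra. }
    assert (0 <= INR m) by apply pos_INR. nra. }
  clearbody m. revert Hu HK. generalize (IZR K). intros k Hu HK.
  apply (ex_derive_minus (fun t => - w0 t - t * (if b then w0 (/ t - k) else w0 (1 - (/ t - k))))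
    (fun t => t * ln t + t * (/ t - k) * ln (t * (/ t - k)) + t * sumlog t m)).
  - destruct b; unfold w0; auto_derive; repeat split; try lra; try apply Rdiv_lt_0_compat; lra.
  - apply (ex_derive_plus (fun t => t * ln t + t * (/ t - k) * ln (t * (/ t - k))) (fun t => t * sumlog t m)).
    + auto_derive. repeat split; lra.
    + apply (ex_derive_mult (fun t => t) (fun t => sumlog t m)).
      * apply ex_derive_id.
      * apply der_sumlog; lra.
Qed.

Lemma w0_bnd : forall y, 0 < y <= 1/2 -> - 4 <= w0 y <= 4.
Proof. intros. pose proof (w0_small y H).
  assert (sqrt y <= 1) by (rewrite <- sqrt_1; apply sqrt_le_1_alt; lra). lra. Qed.

Lemma ftilde_small : forall x, 0 < x < 1/2 -> ftilde x = f x.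
Proof. intros x Hx. unfold ftilde, floorR. rewrite (Int_part_uniq x 0) by (simpl; lra).
  simpl IZR. rewrite Rminus_0_r. destruct (Rlt_dec x (1/2)); [reflexivity|lra]. Qed.

Lemma INR_m : forall K, (1 <= K)%Z -> INR (Z.to_nat K - 1) = IZR K - 1.
Proof. intros. rewrite minus_INR by lia. rewrite INR_IZR_INZ, Z2Nat.id by lia. simpl. ring. Qed.

Lemma part2 : forall eps : R, eps > 0 -> exists delta : R, delta > 0 /\
     forall x : R, irrational x -> 0 < x < delta -> Rabs (ftilde x - 1) < eps.
Proof. intros eps He. exists (Rmin (1/4) ((eps/31)*(eps/31))). split.
  { apply Rmin_pos; [lra|]. apply Rmult_lt_0_compat; lra. }
  intros x Hirr Hx.
  assert (Hx1 : x < 1/4) by (pose proof (Rmin_l (1/4) ((eps/31)*(eps/31))); lra).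
  assert (Hx2 : x < (eps/31)*(eps/31)) by (pose proof (Rmin_r (1/4) ((eps/31)*(eps/31))); lra).
  rewrite ftilde_small by lra.
  set (K := Int_part (/ x)).
  pose proof (Int_part_bnd (/ x)) as Hb. fold K in Hb.
  assert (HKne : / x <> IZR K) by (apply irr_neq_int, irr_inv; auto).
  assert (Hix : / x > 4). { apply (Rmult_lt_reg_l x); [lra|]. rewrite Rinv_r by lra. lra. }
  assert (HK1 : (1 <= K)%Z). { apply le_IZR. lra. }
  rewrite (f_G x K) by (auto; lra).
  set (b := brb (/ x - IZR K)).
  set (m := (Z.to_nat K - 1)%nat).
  assert (Hm : INR m = IZR K - 1) by (apply INR_m; auto).
  set (u := / x - IZR K).
  assert (Hu : 0 < u < 1) by (unfold u; lra).
  set (v := x * u).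
  assert (Hv : v = 1 - IZR K * x) by (unfold v, u; field; lra).
  assert (Hv0 : 0 < v < x) by (unfold v; split; [apply Rmult_lt_0_compat|]; nra).
  set (s := sqrt x).
  assert (Hs : s * s = x) by (apply sqrt_sqrt; lra).
  assert (Hs0 : 0 <= s) by apply sqrt_pos.
  assert (Heps : s <= eps / 31) by (apply sqrt_le_sq; lra).
  assert (Hxs : x <= s) by (apply le_sqrt; lra).
  pose proof (w0_small x ltac:(lra)) as B1. fold s in B1.
  assert (B2 : - 4 <= (if b then w0 u else w0 (1 - u)) <= 4).
  { unfold b, brb. fold u. destruct (Rlt_dec u (1/2)); apply w0_bnd; lra. }
  set (W := if b then w0 u else w0 (1 - u)) in *.
  assert (B2' : - 4 * x <= x * W <= 4 * x) by (split; nra).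
  pose proof (xlnx_bound x ltac:(lra)) as B3. fold s in B3.
  pose proof (xlnx_bound v ltac:(lra)) as B4.
  assert (B4' : sqrt v <= s) by (apply sqrt_le_1_alt; lra).
  pose proof (sum_bounds m x ltac:(lra) ltac:(rewrite Hm; lra)) as B5.
  rewrite Hm in B5. unfold Fp in B5.
  replace (1 - (IZR K - 1 + 1) * x) with v in B5 by (rewrite Hv; ring).
  replace (1 - (IZR K - 1) * x) with (v + x) in B5 by (rewrite Hv; ring).
  replace ((IZR K - 1 + 1) * x) with (1 - v) in B5 by (rewrite Hv; ring).
  replace ((IZR K - 1) * x) with (1 - v - x) in B5 by (rewrite Hv; ring).
  pose proof (xlnx_bound (v + x) ltac:(lra)) as B6.
  assert (B6' : sqrt (v + x) <= 2 * s) by (apply sqrt_le_sq; nra).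
  pose proof (ln1m_bound x ltac:(lra)) as B7.
  assert (B7' : - (2 * x) <= (1 - x) * ln (1 - x) <= 0) by (split; nra).
  unfold G. fold u. fold v. fold m. fold b. fold W.
  apply Rabs_def1; lra.
Qed.

Definition hh (x : R) : R := - w0 x - x * ln x - x * ln (1 - x).

Lemma hh_cont : continuity_pt hh (1/2).
Proof. apply cont_of_der. unfold hh, w0. auto_derive; repeat split; try lra.
  all: try (apply Rdiv_lt_0_compat; lra). Qed.

Lemma hh_half : hh (1/2) = 0.
Proof. unfold hh, w0. replace ((1 - 1/2)/(1/2)) with 1 by field. rewrite ln_1.
  replace (1 - 1/2) with (1/2) by field. lra. Qed.

Lemma part3 : forall eps : R, eps > 0 -> exists delta : R, delta > 0 /\
     forall x : R, irrational x -> 1/2 - delta < x < 1/2 -> Rabs (ftilde x) < eps.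
Proof. intros eps He.
  destruct (cont_eps hh (1/2) hh_cont (eps/2) ltac:(lra)) as [d [Hd Hh]].
  rewrite hh_half in Hh.
  set (e2 := (eps/20)*(eps/20)/5).
  assert (He2 : 0 < e2) by (unfold e2; apply Rdiv_lt_0_compat; [apply Rmult_lt_0_compat|]; lra).
  exists (Rmin (1/10) (Rmin d e2)). split.
  { apply Rmin_pos; [lra|]. apply Rmin_pos; lra. }
  intros x Hirr Hx.
  pose proof (Rmin_l (1/10) (Rmin d e2)). pose proof (Rmin_r (1/10) (Rmin d e2)).
  pose proof (Rmin_l d e2). pose proof (Rmin_r d e2).
  rewrite ftilde_small by lra.
  assert (Hix1 : 2 < / x). { apply (Rmult_lt_reg_l x); [lra|]. rewrite Rinv_r by lra. lra. }
  assert (Hix2 : / x < 5/2). { apply (Rmult_lt_reg_l x); [lra|]. rewrite Rinv_r by lra. lra. }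
  assert (HK : Int_part (/ x) = 2%Z) by (apply Int_part_uniq; simpl; lra).
  rewrite (f_G x 2) by (auto; lra).
  set (u := / x - IZR 2).
  assert (Hu0 : u = (1 - 2 * x) / x) by (unfold u; simpl; field; lra).
  assert (Hle : u <= (5/2) * (1 - 2 * x)).
  { rewrite Hu0. unfold Rdiv. rewrite Rmult_comm. apply Rmult_le_compat_r; lra. }
  assert (Hu : 0 < u < 5 * e2) by (split; [unfold u; simpl; lra| lra]).
  assert (Hu2 : u < 1/2) by lra.
  assert (Hb : brb u = true) by (unfold brb; destruct (Rlt_dec u (1/2)); [reflexivity|lra]).
  rewrite Hb.
  set (v := x * u).
  assert (Hv : 0 < v <= u) by (unfold v; split; [apply Rmult_lt_0_compat|]; nra).
  pose proof (w0_small u ltac:(lra)) as B1.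
  assert (Hsu : sqrt u <= eps / 20) by (apply sqrt_le_sq; try lra; unfold e2 in Hu; lra).
  assert (B1' : - (4 * sqrt u) <= x * w0 u <= 4 * sqrt u).
  { pose proof (sqrt_pos u). split; nra. }
  pose proof (xlnx_bound v ltac:(lra)) as B2.
  assert (B2' : sqrt v <= sqrt u) by (apply sqrt_le_1_alt; lra).
  assert (Hhx : Rabs (hh x - 0) < eps / 2) by (apply Hh; apply Rabs_def1; lra).
  rewrite Rminus_0_r in Hhx. unfold hh in Hhx.
  apply Rabs_def2 in Hhx.
  unfold G. fold u. fold v.
  replace (x * sumlog x (Z.to_nat 2 - 1)) with (x * ln (1 - x)) by (simpl; rewrite Rplus_0_l, Rmult_1_l; reflexivity).
  apply Rabs_def1; lra.
Qed.

Definition near (x0 : R) (P : R -> Prop) := exists d, d > 0 /\ forall x, Rabs (x - x0) < d -> P x.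

Lemma near_and : forall x0 P Q, near x0 P -> near x0 Q -> near x0 (fun x => P x /\ Q x).
Proof. intros x0 P Q [d1 [H1 P1]] [d2 [H2 P2]]. exists (Rmin d1 d2). split.
  apply Rmin_pos; lra. intros x Hx. pose proof (Rmin_l d1 d2). pose proof (Rmin_r d1 d2).
  split; [apply P1|apply P2]; lra. Qed.

Lemma near_impl : forall x0 (P Q : R -> Prop), (forall x, P x -> Q x) -> near x0 P -> near x0 Q.
Proof. intros x0 P Q H [d [Hd HP]]. exists d. split; auto. Qed.

Lemma near_lt : forall h x0 c, continuity_pt h x0 -> h x0 < c -> near x0 (fun x => h x < c).
Proof. intros h x0 c Hc Hl. destruct (cont_eps h x0 Hc (c - h x0) ltac:(lra)) as [d [Hd H]].
  exists d. split; auto. intros x Hx. specialize (H x Hx). apply Rabs_def2 in H. lra. Qed.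

Lemma near_gt : forall h x0 c, continuity_pt h x0 -> c < h x0 -> near x0 (fun x => c < h x).
Proof. intros h x0 c Hc Hl. destruct (cont_eps h x0 Hc (h x0 - c) ltac:(lra)) as [d [Hd H]].
  exists d. split; auto. intros x Hx. specialize (H x Hx). apply Rabs_def2 in H. lra. Qed.

Lemma near_between : forall h x0 a c, continuity_pt h x0 -> a < h x0 < c -> near x0 (fun x => a < h x < c).
Proof. intros. apply near_and; [apply near_gt|apply near_lt]; tauto. Qed.

Lemma near_brb : forall h x0 c, continuity_pt h x0 -> h x0 - c <> 1/2 ->
  near x0 (fun x => brb (h x - c) = brb (h x0 - c)).
Proof. intros h x0 c Hc Hn.
  assert (Hc' : continuity_pt (fun x => h x - c) x0).
  { apply continuity_pt_minus; auto. apply continuity_pt_const. intros a b; auto. }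
  unfold brb at 2. destruct (Rlt_dec (h x0 - c) (1/2)).
  - apply (near_impl _ (fun x => h x - c < 1/2)).
    + intros x Hx. unfold brb. destruct (Rlt_dec (h x - c) (1/2)); [auto|lra].
    + apply (near_lt (fun x => h x - c)); auto.
  - apply (near_impl _ (fun x => 1/2 < h x - c)).
    + intros x Hx. unfold brb. destruct (Rlt_dec (h x - c) (1/2)); [lra|auto].
    + apply (near_gt (fun x => h x - c)); auto.
      lra.
Qed.

Lemma local_f : forall s x0, continuity_pt s x0 -> continuity_pt (fun x => / s x) x0 ->
  irrational (s x0) -> 0 < s x0 < 1/2 ->
  let K := Int_part (/ s x0) in let b := brb (/ s x0 - IZR K) in
  near x0 (fun x => f (s x) = G K b (s x)) /\ continuity_pt (fun x => G K b (s x)) x0.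
Proof. intros s x0 Hs Hi Hirr H0 K b.
  pose proof (Int_part_bnd (/ s x0)) as Hb. fold K in Hb.
  assert (HKne : / s x0 <> IZR K) by (apply irr_neq_int, irr_inv; auto).
  assert (Hix : / s x0 > 2). { apply (Rmult_lt_reg_l (s x0)); [lra|]. rewrite Rinv_r by lra. lra. }
  assert (HK0 : (0 <= K)%Z). { apply le_IZR. lra. }
  split.
  - assert (Hh : / s x0 - IZR K <> 1/2).
    { intro E. apply (irr_neq_half (/ s x0 - IZR K)); auto. apply irr_sub_int, irr_inv; auto. }
    apply (near_impl _ (fun x => (0 < s x < 1/2 /\ IZR K < / s x < IZR K + 1) /\ brb (/ s x - IZR K) = brb (/ s x0 - IZR K))).
    + intros x [[H1 H2] H3]. rewrite (f_G (s x) K H1).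
      * fold b. rewrite H3. reflexivity.
      * apply Int_part_uniq. lra.
    + apply near_and; [apply near_and|].
      * apply near_between; auto.
      * apply (near_between (fun x => / s x)); auto. lra.
      * apply (near_brb (fun x => / s x)); auto.
  - apply (continuity_pt_comp s (G K b)); auto.
    apply cont_of_der. apply der_G; auto. lra.
Qed.

Lemma cont_conclude : forall g x0, near x0 (fun x => ftilde x = g x) -> continuity_pt g x0 ->
  forall eps : R, eps > 0 -> exists delta : R, delta > 0 /\ forall x : R, irrational x -> Rabs (x - x0) < delta ->
         Rabs (ftilde x - ftilde x0) < eps.
Proof. intros g x0 [d [Hd Hn]] Hc eps He.
  destruct (cont_eps g x0 Hc eps He) as [d2 [Hd2 H2]].
  exists (Rmin d d2). split. apply Rmin_pos; lra.
  intros x _ Hx. pose proof (Rmin_l d d2). pose proof (Rmin_r d d2).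
  rewrite (Hn x) by lra. rewrite (Hn x0) by (rewrite Rminus_diag, Rabs_R0; lra).
  apply H2; lra.
Qed.

Lemma part1 : forall x0 : R, irrational x0 ->
     forall eps : R, eps > 0 -> exists delta : R, delta > 0 /\ forall x : R, irrational x -> Rabs (x - x0) < delta ->
         Rabs (ftilde x - ftilde x0) < eps.
Proof. intros x0 Hirr.
  set (k := Int_part x0).
  pose proof (Int_part_bnd x0) as Hb. fold k in Hb.
  assert (Hne : x0 <> IZR k) by (apply irr_neq_int; auto).
  assert (Hirr_t : irrational (x0 - IZR k)) by (apply irr_sub_int; auto).
  assert (Hh : x0 - IZR k <> 1/2) by (apply irr_neq_half; auto).
  assert (Hid : continuity_pt (fun x => x) x0) by apply continuity_pt_id.
  assert (Hnk : near x0 (fun x => IZR k < x < IZR k + 1)) by (apply (near_between (fun x => x)); auto; lra).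
  destruct (Rlt_dec (x0 - IZR k) (1/2)) as [Hlt|Hge].
  - set (s := fun x => x - IZR k).
    assert (Hs : continuity_pt s x0) by (apply cont_of_der; unfold s; auto_derive; auto).
    assert (Hsi : continuity_pt (fun x => / s x) x0) by (apply cont_of_der; unfold s; auto_derive; lra).
    destruct (local_f s x0 Hs Hsi Hirr_t ltac:(unfold s; lra)) as [Hn Hc].
    apply (cont_conclude (fun x => G (Int_part (/ s x0)) (brb (/ s x0 - IZR (Int_part (/ s x0)))) (s x)) x0); [|exact Hc].
    apply (near_impl _ (fun x => (IZR k < x < IZR k + 1 /\ s x < 1/2) /\ f (s x) = G (Int_part (/ s x0)) (brb (/ s x0 - IZR (Int_part (/ s x0)))) (s x))).
    + intros x [[H1 H2] H3]. rewrite <- H3. unfold ftilde, floorR.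
      rewrite (Int_part_uniq x k) by lra. fold (s x).
      destruct (Rlt_dec (s x) (1/2)); [reflexivity|lra].
    + apply near_and; auto. apply near_and; auto. apply near_lt; auto.
  - set (s := fun x => 1 - (x - IZR k)).
    assert (Hs : continuity_pt s x0) by (apply cont_of_der; unfold s; auto_derive; auto).
    assert (Hsi : continuity_pt (fun x => / s x) x0) by (apply cont_of_der; unfold s; auto_derive; lra).
    destruct (local_f s x0 Hs Hsi ltac:(unfold s; apply irr_1m; auto) ltac:(unfold s; lra)) as [Hn Hc].
    apply (cont_conclude (fun x => - G (Int_part (/ s x0)) (brb (/ s x0 - IZR (Int_part (/ s x0)))) (s x)) x0).
    + apply (near_impl _ (fun x => (IZR k < x < IZR k + 1 /\ 1/2 < x - IZR k) /\ f (s x) = G (Int_part (/ s x0)) (brb (/ s x0 - IZR (Int_part (/ s x0)))) (s x))).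
      * intros x [[H1 H2] H3]. rewrite <- H3. unfold ftilde, floorR.
        rewrite (Int_part_uniq x k) by lra.
        destruct (Rlt_dec (x - IZR k) (1/2)); [lra|reflexivity].
      * apply near_and; auto. apply near_and; auto. apply (near_gt (fun x => x - IZR k)); [|lra].
        apply cont_of_der; auto_derive; auto.
    + apply continuity_pt_opp. exact Hc.
Qed.

Theorem mainTheorem6 :
  (* continuity of ftilde restricted to R \ Q at every irrational point *)
  (forall x0 : R, irrational x0 ->
     forall eps : R, eps > 0 -> exists delta : R, delta > 0 /\
       forall x : R, irrational x -> Rabs (x - x0) < delta ->
         Rabs (ftilde x - ftilde x0) < eps) /\
  (* limit 1 as x -> 0+, x irrational *)
  (forall eps : R, eps > 0 -> exists delta : R, delta > 0 /\
     forall x : R, irrational x -> 0 < x < delta ->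
       Rabs (ftilde x - 1) < eps) /\
  (* limit 0 as x -> 1/2-, x irrational *)
  (forall eps : R, eps > 0 -> exists delta : R, delta > 0 /\
     forall x : R, irrational x -> 1/2 - delta < x < 1/2 ->
       Rabs (ftilde x) < eps).
Proof.
  split; [exact part1|split; [exact part2|exact part3]].
Qed.
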